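(* Let $X$ have the standard Cauchy distribution. Then the distribution function $F(x)=\frac{2}{\pi}\arctan(x)$, $x\ge0$, of $|X|$ satisfies $F\in\mathcal{S}_C$ but $F\notin\mathcal{H}$.
   Context: For a distribution function $G$, $G^{-1}(u)=\inf\{x\in\mathbb{R}:G(x)\ge u\}$ for $0<u<1$. For distribution functions $F,G$, write $F\le_{skew}G$ if the function $x\mapsto G^{-1}(F(x))$ is convex (on the set of $x$ with $0<F(x)<1$). $\mathcal{S}_C=\{G: F_C\le_{skew}G\}$ with $F_C(x)=\frac1\pi\arctan(x)+\frac12$, $x\in\mathbb{R}$. For the distribution function $F$ of a non-negative random variable define $h_F(x)=-\log(F(1/x))$, $x>0$; $\mathcal{H}$ is the class of distribution functions of non-negative random variables for which $h_F$ is subadditive, i.e. $h_F(x+y)\le h_F(x)+h_F(y)$ for all $x,y>0$. *)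

(* Defs.v *)
From Stdlib Require Import Reals Lra.
From Coquelicot Require Import Coquelicot.
Open Scope R_scope.

Definition is_distribution_function (G : R -> R) : Prop :=
  (forall x y, x <= y -> G x <= G y) /\
  (forall x, filterlim G (at_right x) (locally (G x))) /\
  is_lim G m_infty 0 /\
  is_lim G p_infty 1.

(* G^{-1}(u) = inf { x in R : G x >= u } (finite for 0 < u < 1 when G is a d.f.) *)
Definition quantile (G : R -> R) (u : R) : R :=
  real (Glb_Rbar (fun x => u <= G x)).

Definition convex_on (S : R -> Prop) (f : R -> R) : Prop :=
  forall x y t, S x -> S y -> 0 <= t <= 1 -> S (t * x + (1 - t) * y) ->
    f (t * x + (1 - t) * y) <= t * f x + (1 - t) * f y.

Definition skew_le (F G : R -> R) : Prop :=
  convex_on (fun x => 0 < F x < 1) (fun x => quantile G (F x)).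

Definition F_C (x : R) : R := atan x / PI + 1 / 2.

Definition in_S_C (G : R -> R) : Prop :=
  is_distribution_function G /\ skew_le F_C G.

Definition h_F (F : R -> R) (x : R) : R := - ln (F (1 / x)).

Definition in_H (F : R -> R) : Prop :=
  is_distribution_function F /\
  (forall x, x < 0 -> F x = 0) /\
  (forall x y, 0 < x -> 0 < y -> h_F F (x + y) <= h_F F x + h_F F y).

Definition F_absCauchy (x : R) : R :=
  if Rle_dec 0 x then 2 / PI * atan x else 0.

(* Main.v *)
Require Import Defs.
From Stdlib Require Import Reals.
From Coquelicot Require Import Coquelicot.
From Stdlib Require Import Lra Psatz.
Open Scope R_scope.

Definition qf (x : R) := x + sqrt (1 + x * x).

Lemma sqrt_sq z : sqrt (1 + z * z) * sqrt (1 + z * z) = 1 + z * z.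
Proof. apply sqrt_sqrt. nra. Qed.

Lemma qf_pos x : 0 < qf x.
Proof.
  unfold qf. pose proof (sqrt_sq x). pose proof (sqrt_pos (1 + x*x)). nra.
Qed.

Lemma atan_qf x : 2 / PI * atan (qf x) = F_C x.
Proof.
  set (q := qf x). pose proof (qf_pos x) as Hq. fold q in Hq.
  set (th := atan q).
  assert (Hth : 0 < th < PI/2).
  { split. unfold th; rewrite <- atan_0; apply atan_increasing; lra.
    pose proof (atan_bound q). unfold th; lra. }
  set (y := 2 * th - PI / 2).
  assert (Hy : - (PI/2) < y < PI/2) by (unfold y; lra).
  assert (Ht : tan y = x).
  { unfold tan, y.
    rewrite sin_minus, cos_minus, sin_PI2, cos_PI2, sin_2a, cos_2a.
    unfold th; rewrite sin_atan, cos_atan.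
    set (s := sqrt (1 + Rsqr q)).
    assert (Hs : 0 < s) by (apply sqrt_lt_R0; unfold Rsqr; nra).
    assert (Hq2 : q * q - 1 = 2 * x * q).
    { unfold q, qf. pose proof (sqrt_sq x). nra. }
    field_simplify; try (split; nra).
    apply Rmult_eq_reg_r with (2 * q); [|nra].
    field_simplify; try nra. }
  assert (atan x = y) by (rewrite <- Ht; apply atan_tan; lra).
  unfold F_C. pose proof PI_RGT_0. unfold y in H. field_simplify; try lra.
rewrite H; field; lra.
Qed.

Lemma atan_nonneg z : 0 <= z -> 0 <= atan z.
Proof. intro. destruct (Req_dec z 0). subst; rewrite atan_0; lra.
  rewrite <- atan_0. left; apply atan_increasing; lra. Qed.

Lemma dist_F : is_distribution_function F_absCauchy.
Proof.
  pose proof PI_RGT_0 as Hpi.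
  split; [|split; [|split]].
  - intros x y Hxy. unfold F_absCauchy.
    destruct (Rle_dec 0 x), (Rle_dec 0 y); try lra.
    + apply Rmult_le_compat_l. left; apply Rdiv_lt_0_compat; lra.
      destruct Hxy. left; now apply atan_increasing. subst; lra.
    + apply Rmult_le_pos. left; apply Rdiv_lt_0_compat; lra. now apply atan_nonneg.
  - intros x. destruct (Rle_dec 0 x) as [Hx|Hx].
    + apply filterlim_ext_loc with (fun z => 2 / PI * atan z).
      * unfold at_right, within. apply filter_forall. intros z Hz.
        unfold F_absCauchy. destruct (Rle_dec 0 z); [auto|lra].
      * assert (Hc : continuous (fun z => 2 / PI * atan z) x).
        { apply (@ex_derive_continuous R_AbsRing R_NormedModule). auto_derive. auto. }
        unfold F_absCauchy. destruct (Rle_dec 0 x); [|lra].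
        eapply filterlim_filter_le_1; [|exact Hc].
        intros P HP. unfold at_right, within.
        apply filter_imp with (2 := HP). auto.
    + assert (F_absCauchy x = 0) as ->.
      { unfold F_absCauchy. destruct (Rle_dec 0 x); [lra|auto]. }
      apply filterlim_ext_loc with (fun _ => 0).
      * unfold at_right, within.
        apply filter_imp with (2 := open_lt 0 x ltac:(lra)).
        intros z Hz _. unfold F_absCauchy. destruct (Rle_dec 0 z); [lra|auto].
      * apply filterlim_const.
  - apply is_lim_ext_loc with (fun _ => 0).
    + exists 0. intros z Hz. unfold F_absCauchy. destruct (Rle_dec 0 z); [lra|auto].
    + apply is_lim_const.
  - set (g := fun w => 2 / PI * (PI / 2 - atan w)).
    assert (Hl : is_lim (fun z => g (/ z)) p_infty (g 0)).
    { apply is_lim_comp_continuous.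
      - replace (Finite 0) with (Rbar_inv p_infty) by reflexivity.
        apply is_lim_inv. apply is_lim_id. discriminate.
      - unfold g. apply (@ex_derive_continuous R_AbsRing R_NormedModule). auto_derive. auto. }
    replace (g 0) with 1 in Hl by (unfold g; rewrite atan_0; field; lra).
    apply is_lim_ext_loc with (2 := Hl).
    exists 0. intros z Hz. unfold g, F_absCauchy.
    destruct (Rle_dec 0 z); [|lra]. rewrite atan_inv by lra. ring.
Qed.

Lemma quantile_F x : quantile F_absCauchy (F_C x) = qf x.
Proof.
  pose proof PI_RGT_0 as Hpi.
  pose proof (qf_pos x) as Hq.
  unfold quantile.
  rewrite (is_glb_Rbar_unique _ (Finite (qf x))); [reflexivity|].
  split.
  - intros z Hz. simpl. unfold F_absCauchy in Hz.
    rewrite <- atan_qf in Hz.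
    destruct (Rle_dec 0 z).
    + destruct (Rle_lt_dec (qf x) z); auto.
      exfalso. pose proof (atan_increasing _ _ r0).
      assert (2 / PI * atan z < 2 / PI * atan (qf x)).
      { apply Rmult_lt_compat_l; auto. apply Rdiv_lt_0_compat; lra. }
      lra.
    + exfalso. assert (0 < atan (qf x)) by (rewrite <- atan_0; apply atan_increasing; lra).
      assert (0 < 2 / PI * atan (qf x)) by (apply Rmult_lt_0_compat; auto; apply Rdiv_lt_0_compat; lra).
      lra.
  - intros b Hb. apply Hb. unfold F_absCauchy. rewrite <- atan_qf.
    destruct (Rle_dec 0 (qf x)); lra.
Qed.

Lemma qf_convex x y t : 0 <= t <= 1 ->
  qf (t * x + (1 - t) * y) <= t * qf x + (1 - t) * qf y.
Proof.
  intros Ht. unfold qf.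
  set (z := t * x + (1 - t) * y).
  pose proof (sqrt_sq x) as HA. pose proof (sqrt_sq y) as HB.
  pose proof (sqrt_pos (1 + x*x)) as HA0. pose proof (sqrt_pos (1 + y*y)) as HB0.
  set (A := sqrt (1 + x*x)) in *. set (B := sqrt (1 + y*y)) in *.
  assert (HAB : 1 + x * y <= A * B).
  { assert ((A*B)*(A*B) = (1+x*x)*(1+y*y)) by (rewrite <- HA, <- HB; ring).
    assert (0 <= A * B) by (apply Rmult_le_pos; auto).
    set (P := A * B) in *.
    destruct (Rle_lt_dec (1 + x*y) P); auto.
    assert (P * P < (1 + x*y) * (1 + x*y)) by (apply Rmult_le_0_lt_compat; lra).
    pose proof (Rle_0_sqr (x - y)). unfold Rsqr in *. nra. }
  assert (sqrt (1 + z*z) <= t * A + (1 - t) * B).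
  { assert (0 <= t * A + (1 - t) * B) by nra.
    rewrite <- (sqrt_square (t * A + (1 - t) * B)) by auto.
    apply sqrt_le_1_alt.
    unfold z.
    assert (0 <= t * (1 - t)) by nra.
    assert (t*(1-t)*(2 + 2 * x * y) <= t * (1-t) * (2 * (A * B))) by (apply Rmult_le_compat_l; lra).
    assert (E : (t * A + (1 - t) * B) * (t * A + (1 - t) * B) - (1 + (t * x + (1 - t) * y) * (t * x + (1 - t) * y))
      = t * (1 - t) * (2 * (A * B)) - t * (1 - t) * (2 + 2 * x * y)).
    { replace ((t * A + (1 - t) * B) * (t * A + (1 - t) * B)) with (t*t*(A*A) + (1-t)*(1-t)*(B*B) + 2*t*(1-t)*(A*B)) by ring.
      rewrite HA, HB. ring. }
    lra. }
  unfold z in *; lra.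
Qed.

Lemma atan_le_id z : 0 < z -> atan z <= z.
Proof.
  intro Hz.
  destruct (MVT_cor1 atan 0 z derivable_pt_atan Hz) as [c [Hc Hc2]].
  rewrite derive_pt_atan, atan_0 in Hc.
  assert (0 < 1 + Rsqr c) by (unfold Rsqr; nra).
  assert (1 / (1 + Rsqr c) <= 1).
  { unfold Rdiv; rewrite Rmult_1_l. rewrite <- Rinv_1. apply Rinv_le_contravar; try lra. unfold Rsqr; nra. }
  nra.
Qed.

Lemma atan_gt_sin z : 0 < z -> z / sqrt (1 + z²) < atan z.
Proof.
  intro Hz. rewrite <- sin_atan. apply sin_lt_x.
  rewrite <- atan_0. now apply atan_increasing.
Qed.

Lemma not_H : ~ in_H F_absCauchy.
Proof.
  intros [_ [_ H]].
  specialize (H (/10) (/10) ltac:(lra) ltac:(lra)).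
  unfold h_F in H.
  replace (1 / (/10 + /10)) with 5 in H by field.
  replace (1 / /10) with 10 in H by field.
  unfold F_absCauchy in H.
  destruct (Rle_dec 0 5); [|lra]. destruct (Rle_dec 0 10); [|lra].
  pose proof PI_RGT_0 as Hpi. pose proof PI_4. pose proof PI2_3_2.
  assert (A10 : atan 10 = PI/2 - atan (/10)).
  { rewrite atan_inv; lra. }
  assert (A5 : atan 5 = PI/2 - atan (/5)).
  { rewrite atan_inv; lra. }
  set (e := atan (/10)) in *.
  assert (He : e <= /10) by (apply atan_le_id; lra).
  assert (He0 : 0 < e) by (unfold e; rewrite <- atan_0; apply atan_increasing; lra).
  assert (Hs : sqrt (1 + Rsqr (/5)) < 1.0199).
  { rewrite <- (sqrt_pow2 1.0199) by lra. apply sqrt_lt_1_alt. unfold Rsqr; lra. }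
  assert (Hs0 : 0 < sqrt (1 + Rsqr (/5))) by (apply sqrt_lt_R0; unfold Rsqr; lra).
  pose proof (atan_gt_sin (/5) ltac:(lra)) as Hf.
  assert (Hf2 : 0.196 < atan (/5)).
  { apply Rlt_trans with (/5 / sqrt (1 + Rsqr (/5))); auto.
    apply Rmult_lt_reg_r with (sqrt (1 + Rsqr (/5))); auto.
    unfold Rdiv; rewrite Rmult_assoc, Rinv_l by lra. nra. }
  assert (Hkey0 : PI * (PI/2 - atan (/5)) < 2 * (PI/2 - e) * (PI/2 - e)).
  { assert (0 <= (/10 - e) * (2*PI - 2*(/10 + e))) by (apply Rmult_le_pos; lra).
    assert (0 < PI * (atan (/5) - 0.196)) by (apply Rmult_lt_0_compat; lra).
    nra. }
  assert (Hkey : 2 / PI * atan 5 < (2 / PI * atan 10) * (2 / PI * atan 10)).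
  { rewrite A5, A10.
    replace ((2 / PI * (PI / 2 - e)) * (2 / PI * (PI / 2 - e))) with
      (2 / PI * (2 * (PI/2 - e) * (PI/2 - e) / PI)) by (field; lra).
    apply Rmult_lt_compat_l. apply Rdiv_lt_0_compat; lra.
    apply Rmult_lt_reg_l with PI; auto.
    replace (PI * (2 * (PI / 2 - e) * (PI / 2 - e) / PI)) with (2 * (PI / 2 - e) * (PI / 2 - e)) by (field; lra).
    lra. }
  assert (P10 : 0 < 2 / PI * atan 10).
  { apply Rmult_lt_0_compat. apply Rdiv_lt_0_compat; lra.
    rewrite <- atan_0; apply atan_increasing; lra. }
  assert (P5 : 0 < 2 / PI * atan 5).
  { apply Rmult_lt_0_compat. apply Rdiv_lt_0_compat; lra.
    rewrite <- atan_0; apply atan_increasing; lra. }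
  pose proof (ln_mult _ _ P10 P10).
  pose proof (ln_increasing _ _ P5 Hkey). lra.
Qed.

Theorem mainTheorem9 : in_S_C F_absCauchy /\ ~ in_H F_absCauchy.
Proof.
  split; [|exact not_H].
  split; [exact dist_F|].
  intros x y t _ _ Ht _.
  rewrite !quantile_F. apply qf_convex; auto.
Qed.
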